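(* Let $F$ be a forest with $n$ vertices and $m$ connected components. Then $\tau_F(x)=x^m$.
   Context: For a weighted graph $(G,\omega)$ (a finite simple graph with $\omega:V(G)\to\{1,2,\dots\}$), $X_{(G,\omega)}=\sum_\kappa\prod_{v\in V(G)}x_{\kappa(v)}^{\omega(v)}$, summed over proper colourings $\kappa:V(G)\to\{1,2,\dots\}$; for an unweighted graph $G$, $X_G$ is this with $\omega\equiv1$. Let $P_n$ be the path on $n$ vertices and for a partition $\lambda$ let $P_\lambda$ be the disjoint union $P_{\lambda_1}\cup\dots\cup P_{\lambda_{\ell(\lambda)}}$. It is known that $\{X_{P_\lambda}\}_\lambda$ is a (multiplicative) basis of the algebra $\Lambda$ of symmetric functions over $\mathbb{Q}$. For $f=\sum_\lambda a_\lambda X_{P_\lambda}\in\Lambda$, the tree polynomial is $\tau_f(x)=\sum_\lambda a_\lambda x^{\ell(\lambda)}$, and $\tau_{(G,\omega)}:=\tau_{X_{(G,\omega)}}$, $\tau_G:=\tau_{X_G}$. *)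

(* Defs.v *)
From HB Require Import structures.
From mathcomp Require Import all_boot all_order all_algebra.
From mathcomp Require Import mpoly.
From Stdlib Require Import ClassicalEpsilon.
Set Implicit Arguments. Unset Strict Implicit. Unset Printing Implicit Defensive.
Import GRing.Theory.
Local Open Scope ring_scope.

Definition proper_col (T : finType) (e : rel T) (N : nat) (k : {ffun T -> 'I_N}) : bool :=
  [forall x, forall y, e x y ==> (k x != k y)].

(* X_G truncated to the variables x_1..x_N (colour i <-> variable 'X_i). *)
Definition chrom (T : finType) (e : rel T) (N : nat) : {mpoly rat[N]} :=
  \sum_(k : {ffun T -> 'I_N} | proper_col e k) \prod_(v : T) 'X_(k v).

(* A symmetric function is represented by its family of truncations to
   N variables, for all N (the map Lambda -> prod_N Lambda_N is injective). *)
Definition sym_fun := forall N : nat, {mpoly rat[N]}.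

Definition XG (T : finType) (e : rel T) : sym_fun := fun N => chrom e N.

Definition is_partition (l : seq nat) : bool :=
  sorted geq l && all (fun x => 0 < x)%N l.

(* the disjoint union of paths P_{l_1} u ... u P_{l_k} *)
Definition pathU_vert (l : seq nat) : finType :=
  {i : 'I_(size l) & 'I_(nth 0%N l i)}.

Definition pathU_rel (l : seq nat) : rel (pathU_vert l) :=
  fun u v => (tag u == tag v) &&
    (((nat_of_ord (tagged u)).+1 == nat_of_ord (tagged v))
     || ((nat_of_ord (tagged v)).+1 == nat_of_ord (tagged u))).

Definition XP (l : seq nat) : sym_fun := fun N => chrom (@pathU_rel l) N.

Definition path_comb (s : seq (seq nat * rat)) : sym_fun :=
  fun N => \sum_(p <- s) p.2 *: XP p.1 N.

Definition tau_comb (s : seq (seq nat * rat)) : {poly rat} :=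
  \sum_(p <- s) p.2 *: 'X^(size p.1).

Definition is_tree_poly (f : sym_fun) (q : {poly rat}) : Prop :=
  exists s : seq (seq nat * rat),
    [/\ all is_partition (map fst s), (forall N, f N = path_comb s N) & q = tau_comb s].

(* the tree polynomial (well defined since {X_{P_lambda}} is a basis) *)
Definition tau (f : sym_fun) : {poly rat} := epsilon (inhabits 0) (is_tree_poly f).

Definition tauG (T : finType) (e : rel T) : {poly rat} := tau (XG e).

Definition acyclic (T : finType) (e : rel T) : Prop :=
  ~ exists c : seq T, [/\ uniq c, (2 < size c)%N & cycle e c].

(* Main.v *)
Require Import Defs.
From HB Require Import structures.
From mathcomp Require Import all_boot all_order all_algebra.
From mathcomp Require Import mpoly.
From mathcomp Require Import zify.
From Stdlib Require Import Classical ClassicalEpsilon.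
Set Implicit Arguments. Unset Strict Implicit. Unset Printing Implicit Defensive.


Section Leaf.
Variables (T : finType) (e : rel T).
Hypotheses (esym : ssrbool.symmetric e) (eirr : irreflexive e) (eacy : acyclic e).

Lemma no_back r u v w : uniq (rcons (rcons r u) v) -> sorted e (rcons (rcons r u) v) ->
  e v w -> w \in r -> False.
Proof.
move=> U S evw wr; apply: eacy.
case/splitPr: wr U S => r1 r2.
rewrite -!cats1 -!catA /= => U S.
exists (w :: r2 ++ [:: u; v]); split.
- by move: U; rewrite cat_uniq => /and3P[].
- by rewrite /= size_cat /= addn2.
- rewrite /cycle rcons_path last_cat /= evw andbT.
  by move: S; rewrite sorted_cat_cons => /andP[].
Qed.

Lemma leaf_exists : (exists x y, e x y) ->
  exists v u, e v u /\ forall w, e v w -> w = u.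
Proof.
move=> [x [y exy]].
apply: NNPP => nleaf.
have step : forall n, exists r u v, [&& uniq (rcons (rcons r u) v),
     sorted e (rcons (rcons r u) v) & size r == n].
  elim=> [|n [r [u [v /and3P[U S /eqP sz]]]]].
    have xy : x != y by apply/negP => /eqP xy; move: exy; rewrite xy eirr.
    by exists [::], x, y; rewrite /= exy inE xy.
  have evu : e v u.
    move: S; rewrite -!cats1 -catA /= sorted_cat_cons => /andP[_] /=.
    by rewrite esym andbT.
  have [w evw wu] : exists2 w, e v w & w != u.
    apply: NNPP => H; apply: nleaf; exists v, u; split => // w evw.
    by apply/eqP; apply: NNPP => /negP wu; apply: H; exists w.
  have wv : w != v by apply/negP => /eqP wv; move: evw; rewrite wv eirr.
  have wp : w \notin rcons (rcons r u) v.
    rewrite mem_rcons inE (negPf wv) /= mem_rcons inE (negPf wu) /=.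
    by apply/negP => wr; apply: (no_back U S evw wr).
  exists (rcons r u), v, w; rewrite size_rcons sz eqxx andbT.
  rewrite rcons_uniq wp U /=.
  by rewrite -cats1 -(cats1 (rcons r u) v) -catA /= sorted_cat_cons S /= evw.
have [r [u [v /and3P[U _ /eqP sz]]]] := step #|T|.
move/card_uniqP: U; rewrite !size_rcons sz => H.
have := max_card (mem (rcons (rcons r u) v)); rewrite H.
by move=> /(leq_trans (leqnSn _)); rewrite ltnn.
Qed.
End Leaf.

Definition upd (T : finType) (C : Type) (k : {ffun T -> C}) (v : T) (c : C) :=
  [ffun x => if x == v then c else k x].

Section Count.
Variable T : finType.

Lemma sum_upd (K : nat) (z : 'I_K) (v : T) (F : {ffun T -> 'I_K} -> nat) :
  \sum_(k : {ffun T -> 'I_K}) F k = \sum_(k : {ffun T -> 'I_K} | k v == z) \sum_(c : 'I_K) F (upd k v c).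
Proof.
rewrite (partition_big (fun k => upd k v z) (fun k => k v == z)) /=; last first.
  by move=> k _; rewrite ffunE eqxx.
apply: eq_bigr => k kvz.
rewrite (partition_big (fun k0 : {ffun T -> 'I_K} => k0 v) xpredT) //=.
apply: eq_bigr => c _.
rewrite (big_pred1 (upd k v c)) // => k0 /=.
apply/andP/eqP => [[/eqP <- /eqP <-]|->].
  by apply/ffunP => x; rewrite !ffunE; case: eqP => // ->.
split; apply/eqP; last by rewrite ffunE eqxx.
by apply/ffunP => x; rewrite !ffunE; case: eqP => // ->; rewrite (eqP kvz).
Qed.

Lemma noedge_count K (e : rel T) : (forall x y, ~~ e x y) ->
  \sum_(k : {ffun T -> 'I_K}) (proper_col e k : nat) = K ^ #|T| /\ n_comp e T = #|T|.
Proof.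
move=> ne; split.
  rewrite (eq_bigr (fun _ => 1%N)); last first.
    move=> k _; suff -> : proper_col e k by [].
    by apply/forallP => x; apply/forallP => y; rewrite (negPf (ne x y)).
  by rewrite sum1_card card_ffun card_ord.
rewrite /n_comp_mem; apply: eq_card => x; rewrite !inE andbT.
have H : forall y, connect e x y -> y = x.
  move=> y /connectP[[|a p]] /=; first by move=> _ ->.
  by rewrite (negPf (ne x a)).
by apply/eqP; apply: H; apply: connect_root.
Qed.

Lemma forest_count K : forall N (e : rel T), #|[set p : T * T | e p.1 p.2]| <= N ->
  ssrbool.symmetric e -> irreflexive e -> acyclic e ->
  \sum_(k : {ffun T -> 'I_K.+1}) (proper_col e k : nat)
     = K.+1 ^ (n_comp e T) * K ^ (#|T| - n_comp e T) /\ n_comp e T <= #|T|.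
Proof.
elim=> [|N IH] e cardE esym eirr eacy.
  have ne : forall x y, ~~ e x y.
    move=> x y; apply/negP => exy.
    have : (x, y) \in [set p : T * T | e p.1 p.2] by rewrite inE.
    by move: cardE; rewrite leqn0 cards_eq0 => /eqP ->; rewrite inE.
  have [-> ->] := noedge_count K.+1 ne.
  by rewrite subnn expn0 muln1.
case: (classic (exists x y, e x y)) => [hex|nexy]; last first.
  have ne : forall x y, ~~ e x y.
    by move=> x y; apply/negP => H; apply: nexy; exists x, y.
  have [-> ->] := noedge_count K.+1 ne.
  by rewrite subnn expn0 muln1.
have [v [u [evu leaf]]] := leaf_exists esym eirr eacy hex.
have uv : u != v by apply/negP => /eqP uv; move: evu; rewrite uv eirr.
pose e' := [rel x y | [&& e x y, x != v & y != v]].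
have e'sym : ssrbool.symmetric e'.
  by move=> x y /=; rewrite esym; case: (x != v); case: (y != v); rewrite /= ?andbF ?andbT.
have e'irr : irreflexive e' by move=> x /=; rewrite eirr.
have e'acy : acyclic e'.
  move=> [c [U S C]]; apply: eacy; exists c; split => //.
  by apply: sub_cycle C => x y /andP[].
have cardE' : #|[set p : T * T | e' p.1 p.2]| <= N.
  rewrite -ltnS; apply: leq_trans cardE; apply: proper_card.
  apply/properP; split.
    by apply/subsetP => p; rewrite !inE => /andP[].
  by exists (v, u); rewrite !inE //= eqxx andbF.
have [IHc IHn] := IH e' cardE' e'sym e'irr e'acy.
have pe : forall (k : {ffun T -> 'I_K.+1}) (c : 'I_K.+1), proper_col e (upd k v c) = proper_col e' k && (c != k u).
  move=> k c; rewrite /proper_col; apply/idP/andP => [/forallP H|[/forallP H cku]]; last apply/forallP => x.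
    split.
      apply/forallP => x; apply/forallP => y; apply/implyP => /and3P[exy xv yv].
      by have := forallP (H x) y; rewrite exy !ffunE (negPf xv) (negPf yv).
    by have := forallP (H v) u; rewrite evu !ffunE eqxx (negPf uv).
  apply/forallP => y; apply/implyP => exy; rewrite !ffunE.
  case: (eqVneq x v) => [xv|xv].
    have yu : y = u by apply: leaf; rewrite -xv.
    by rewrite yu (negPf uv).
  case: (eqVneq y v) => [yv|yv].
    have xu : x = u by apply: leaf; rewrite -yv esym.
    by rewrite xu eq_sym.
  by have := forallP (H x) y; rewrite /= exy xv yv.
have pe' : forall (k : {ffun T -> 'I_K.+1}) (c : 'I_K.+1), proper_col e' (upd k v c) = proper_col e' k.
  move=> k c; apply: eq_forallb => x; apply: eq_forallb => y.
  rewrite /=; case: (boolP [&& e x y, x != v & y != v]) => // /and3P[_ xv yv].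
  by rewrite !ffunE (negPf xv) (negPf yv).
set Y := \sum_(kk : {ffun T -> 'I_K.+1} | kk v == ord0) (proper_col e' kk : nat).
have sumE : \sum_(k : {ffun T -> 'I_K.+1}) (proper_col e k : nat) = K * Y.
  rewrite (sum_upd ord0 v) big_distrr /=; apply: eq_bigr => kk _.
  under eq_bigr do rewrite pe.
  case: (proper_col e' kk) => /=; last by rewrite big1 ?muln0.
  rewrite muln1.
  have -> : \sum_(c : 'I_K.+1) ((c != kk u) : nat) = #|predC1 (kk u)|.
    rewrite -sum1_card [RHS]big_mkcond /=.
    by apply: eq_bigr => i _; rewrite inE; case: (i != kk u).
  by rewrite cardC1 card_ord.
have sumE' : \sum_(k : {ffun T -> 'I_K.+1}) (proper_col e' k : nat) = K.+1 * Y.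
  rewrite (sum_upd ord0 v) big_distrr /=; apply: eq_bigr => kk _.
  under eq_bigr do rewrite pe'.
  by rewrite sum_nat_const card_ord mulnC.
have csym' := sym_connect_sym e'sym.
have csym := sym_connect_sym esym.
have ncomp : n_comp e' T = (n_comp e T).+1.
  rewrite (n_compC (pred1 v)).
  have -> : n_comp e' (pred1 v) = 1%N.
    rewrite -(n_comp_connect csym' v); apply: eq_n_comp_r => x; rewrite !inE.
    apply/eqP/idP => [->|]; first exact: connect0.
    by case/connectP => [[|a p]] /= => [_ ->|/andP[/and3P[_ /negP]]].
  rewrite add1n; congr _.+1.
  pose phi x := if x == v then u else x.
  have phiv x : phi x != v by rewrite /phi; case: (x =P v) => [_|/eqP //]; exact: uv.
  have cla : closed e' [predC pred1 v].
    by move=> x y /and3P[_ xv yv]; rewrite !inE xv yv.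
  have adj : rel_adjunction phi e' e [predC pred1 v].
    split.
      move=> x xa; exists x; rewrite /phi; move: xa; rewrite !inE => /negPf ->.
      exact: connect0.
    move=> x y _; apply/idP/idP.
      case/connectP => p; elim: p x => [|a p IHp] x /=; first by move=> _ ->.
      case/andP => exa /IHp {}IHp /IHp; apply: connect_trans.
      rewrite /phi; case: (eqVneq x v) => [xv|xv].
        have -> : a = u by apply: leaf; rewrite -xv.
        by rewrite (negPf uv).
      case: (eqVneq a v) => [av|av].
        have -> : x = u by apply: leaf; rewrite -av esym.
        exact: connect0.
      by apply: connect1; rewrite /= exa xv av.
    move=> H.
    have sub : connect e (phi x) (phi y).
      by apply: connect_sub H => a b /and3P[eab _ _]; apply: connect1.
    have px : forall z, connect e z (phi z).
      by move=> z; rewrite /phi; case: eqP => [->|_]; [apply: connect1|].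
    apply: connect_trans (px x) _; apply: connect_trans sub _.
    by rewrite csym.
  rewrite (adjunction_n_comp phi csym' csym cla adj).
  by apply: eq_n_comp_r => x; rewrite !inE phiv.
move: IHc IHn; rewrite sumE' sumE ncomp => IHc IHn.
split; last by apply: ltnW.
have Yv : Y = K.+1 ^ n_comp e T * K ^ (#|T| - (n_comp e T).+1).
  by apply/eqP; rewrite -(eqn_pmul2l (ltn0Sn K)) IHc expnS mulnA.
by rewrite Yv mulnCA -expnS subnSK.
Qed.
End Count.

Import GRing.Theory Num.Theory.
Local Open Scope ring_scope.

Lemma chrom_bij (T T' : finType) (e : rel T) (e' : rel T') (f : T -> T') :
  bijective f -> (forall x y, e' (f x) (f y) = e x y) -> forall N, chrom e N = chrom e' N.
Proof.
case=> g fK gK ef N; rewrite /chrom.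
rewrite (reindex (fun k' : {ffun T' -> 'I_N} => [ffun x => k' (f x)])) /=; last first.
  apply: onW_bij; exists (fun k : {ffun T -> 'I_N} => [ffun y => k (g y)]).
    by move=> k'; apply/ffunP => y; rewrite !ffunE gK.
  by move=> k; apply/ffunP => y; rewrite !ffunE fK.
apply: eq_big => k'.
  apply/forallP/forallP => H x.
    apply/forallP => y; apply/implyP => exy.
    have := forallP (H (g x)) (g y); rewrite -ef !gK exy !ffunE !gK; exact.
  apply/forallP => y; apply/implyP => exy.
  by have := forallP (H (f x)) (f y); rewrite ef exy !ffunE.
move=> _; rewrite (reindex f) /=; last by apply: onW_bij; exists g.
by apply: eq_bigr => v _; rewrite ffunE.
Qed.

Definition sumrel (T1 T2 : finType) (e1 : rel T1) (e2 : rel T2) : rel (T1 + T2) :=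
  fun u v => match u, v with
  | inl a, inl b => e1 a b
  | inr a, inr b => e2 a b
  | _, _ => false end.

Lemma chrom_sum (T1 T2 : finType) (e1 : rel T1) (e2 : rel T2) N :
  chrom (sumrel e1 e2) N = chrom e1 N * chrom e2 N.
Proof.
rewrite /chrom; symmetry; rewrite big_distrl /=; under eq_bigr do rewrite big_distrr /=.
rewrite pair_big_dep /=.
pose h (p : {ffun T1 -> 'I_N} * {ffun T2 -> 'I_N}) : {ffun T1 + T2 -> 'I_N} :=
  [ffun u => match u with inl a => p.1 a | inr b => p.2 b end].
rewrite (reindex h) /=; last first.
  apply: onW_bij; exists (fun k : {ffun T1 + T2 -> 'I_N} =>
    ([ffun a => k (inl a)], [ffun b => k (inr b)])).
    by case=> k1 k2; congr (_, _); apply/ffunP => a; rewrite !ffunE.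
  by move=> k; apply/ffunP => [[a|b]]; rewrite !ffunE.
apply: eq_big => [[k1 k2]|[k1 k2] _] /=.
  rewrite /proper_col; apply/andP/forallP => [[/forallP H1 /forallP H2] [a|b]|H].
    apply/forallP => [[c|c]] /=; rewrite ?ffunE //.
    exact: (forallP (H1 a) c).
    apply/forallP => [[c|c]] /=; rewrite ?ffunE //.
    exact: (forallP (H2 b) c).
  split; apply/forallP => x; apply/forallP => y; apply/implyP => exy.
    by have := forallP (H (inl x)) (inl y); rewrite /= exy !ffunE.
  by have := forallP (H (inr x)) (inr y); rewrite /= exy !ffunE.
by rewrite big_sumType /=; congr (_ * _); apply: eq_bigr => v _; rewrite ffunE.
Qed.

Definition pathrel (c : nat) : rel 'I_c :=
  fun a b => ((a : nat).+1 == b) || ((b : nat).+1 == a).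
Definition Pth (c N : nat) : {mpoly rat[N]} := chrom (@pathrel c) N.

Definition pu_in x (l : seq nat) (u : 'I_x + pathU_vert l) : pathU_vert (x :: l) :=
  match u with
  | inl j => @Tagged 'I_(size (x :: l)) ord0 (fun i => 'I_(nth 0%N (x :: l) i)) j
  | inr w => @Tagged 'I_(size (x :: l)) (Ordinal (ltn_ord (tag w) : (tag w).+1 < (size l).+1)%N)
               (fun i => 'I_(nth 0%N (x :: l) i)) (tagged w)
  end.

Lemma Tagged_inj (I : eqType) (T_ : I -> Type) (i : I) (a b : T_ i) :
  Tagged T_ a = Tagged T_ b -> a = b.
Proof. by move=> H; have := congr1 (tagged_as (Tagged T_ a)) H; rewrite !tagged_asE. Qed.

Lemma pu_in_inj x l : injective (@pu_in x l).
Proof.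
move=> [a|[i a]] [b|[j b]] //= H.
  by congr inl; apply: (Tagged_inj H).
have ij : i = j.
  by apply: val_inj; move: (congr1 (fun u => nat_of_ord (tag u)) H) => /= [].
subst j; congr inr; congr Tagged.

exact: (Tagged_inj H).
Qed.

Lemma card_pathU l : #|pathU_vert l| = (\sum_(i < size l) nth 0%N l i)%N.
Proof.
rewrite card_tagged sumnE big_map big_enum /=.
by apply: eq_bigr => i _; rewrite card_ord.
Qed.

Lemma pu_in_bij x l : bijective (@pu_in x l).
Proof.
apply: inj_card_bij; first exact: pu_in_inj.
rewrite card_sum !card_pathU card_ord /= big_ord_recl /=.
by rewrite leq_add2l. 
Qed.

Lemma XP_cons x l N : XP (x :: l) N = Pth x N * XP l N.
Proof.
rewrite /XP /Pth -chrom_sum; symmetry; apply: chrom_bij (pu_in_bij x l) _ N.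
by move=> [a|[i a]] [b|[j b]].
Qed.

Lemma chrom_empty (T : finType) (e : rel T) N : #|T| = 0%N -> chrom e N = 1.
Proof.
move=> T0.
have F : T -> False by move=> x; have := card0_eq T0 x; rewrite inE.
pose k0 : {ffun T -> 'I_N} := [ffun x => match F x with end].
rewrite /chrom (big_pred1 k0); last first.
  move=> k /=; have -> : k == k0 by apply/eqP/ffunP => x; case: (F x).
  by apply/forallP => x; case: (F x).
by rewrite big_pred0 // => x; case: (F x).
Qed.

Lemma XP_nil N : XP [::] N = 1.
Proof. by apply: chrom_empty; rewrite card_pathU big_ord0. Qed.

Lemma XP_prod l N : XP l N = \prod_(x <- l) Pth x N.
Proof.
elim: l => [|x l IH]; first by rewrite XP_nil big_nil.
by rewrite XP_cons IH big_cons.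
Qed.

Definition CS (T : finType) (f : {ffun T * T -> bool}) N : {mpoly rat[N]} :=
  \sum_(k : {ffun T -> 'I_N} | [forall p, f p ==> (k p.1 == k p.2)]) \prod_v 'X_(k v).

Definition cf (T : finType) (D : {set T * T}) (f : {ffun T * T -> bool}) : rat :=
  \prod_p (if f p then (if p \in D then -1 else 0) else 1).

Lemma prod_bool (I : finType) (P : pred I) :
  \prod_i ((P i)%:R : rat) = ([forall i, P i])%:R.
Proof.
case: (boolP [forall i, P i]) => [/forallP H|/forallPn [i Pi]].
  by apply: big1 => i _; rewrite H.
by rewrite (bigD1 i) //= (negbTE Pi) mul0r.
Qed.

Lemma scale_bool N (b : bool) (M : {mpoly rat[N]}) :
  (b%:R : rat) *: M = if b then M else 0.
Proof. by case: b; rewrite ?scale1r ?scale0r. Qed.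

Lemma stanley (T : finType) (e : rel T) (D : {set T * T}) N :
  (forall k : {ffun T -> 'I_N}, proper_col e k = [forall p in D, k p.1 != k p.2]) ->
  chrom e N = \sum_(f : {ffun T * T -> bool}) cf D f *: CS f N.
Proof.
move=> HD.
have E1 : forall k : {ffun T -> 'I_N}, ((proper_col e k)%:R : rat) =
    \sum_(f : {ffun T * T -> bool}) cf D f * ([forall p, f p ==> (k p.1 == k p.2)])%:R.
  move=> k; rewrite HD -prod_bool.
  transitivity (\prod_(p : T * T) \sum_(b : bool)
     (if b then (if p \in D then -1 else 0) * ((k p.1 == k p.2)%:R : rat) else 1)).
    apply: eq_bigr => p _; rewrite big_bool /=.
    by case: (p \in D); case: (k p.1 == k p.2); rewrite /= ?mulr1 ?mulr0 ?add0r ?mulN1r ?addNr.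
  rewrite bigA_distr_bigA /=; apply: eq_bigr => f _.
  rewrite /cf -prod_bool -big_split /=; apply: eq_bigr => p _.
  by case: (f p); rewrite /= ?mulr1.
rewrite /chrom big_mkcond /=.
under eq_bigr do rewrite -scale_bool E1 scaler_suml.
rewrite exchange_big /=; apply: eq_bigr => f _.
rewrite /CS scaler_sumr [RHS]big_mkcond /=; apply: eq_bigr => k _.
by rewrite -scalerA scale_bool; case: ifP; rewrite ?scaler0.
Qed.

Definition relf (T : finType) (f : {ffun T * T -> bool}) : rel T :=
  fun a b => f (a, b) || f (b, a).
Definition pp (c N : nat) : {mpoly rat[N]} := \sum_(i < N) 'X_i ^+ c.
Definition csz (T : finType) (R : rel T) (r : T) : nat :=
  #|[set y | fingraph.root R y == r]|.

Lemma relf_sym (T : finType) (f : {ffun T * T -> bool}) : ssrbool.symmetric (@relf T f).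
Proof. by move=> a b; rewrite /relf orbC. Qed.

Lemma CS_const (T : finType) (f : {ffun T * T -> bool}) N (k : {ffun T -> 'I_N}) :
  [forall p, f p ==> (k p.1 == k p.2)] =
  [forall v, k v == k (fingraph.root (relf f) v)].
Proof.
have csym := sym_connect_sym (@relf_sym T f).
have kc : [forall p, f p ==> (k p.1 == k p.2)] -> forall x y,
    connect (relf f) x y -> k x = k y.
  move=> /forallP H x y /connectP[p]; elim: p x => [|a p IHp] x /=; first by move=> _ ->.
  case/andP => /orP[fxa|fax] /IHp {}IHp /IHp <-.
    by have /implyP/(_ fxa)/eqP := H (x, a).
  by have /implyP/(_ fax)/eqP := H (a, x).
apply/idP/idP => [H|/forallP H].
  apply/forallP => v; apply/eqP; apply: kc H _ _ _.
  exact: connect_root.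
apply/forallP => [[a b]]; apply/implyP => fab /=.
have : connect (relf f) a b by apply: connect1; rewrite /relf fab.
move/(fingraph.rootP csym) => rab.
by rewrite (eqP (H a)) (eqP (H b)) rab.
Qed.

Lemma CS_prod (T : finType) (f : {ffun T * T -> bool}) N :
  CS f N = \prod_(r | roots (relf f) r) pp (csz (relf f) r) N.
Proof.
set R := relf f.
have csym := sym_connect_sym (@relf_sym T f).
rewrite /CS.
rewrite (eq_bigl (fun k : {ffun T -> 'I_N} => [forall v, k v == k (fingraph.root R v)])); last by move=> k; rewrite CS_const.
case: N => [|N].
  case: (pickP (fun _ : T => true)) => [x _|T0].
    rewrite big_pred0; last by move=> k; have := k x; case.
    rewrite (bigD1 (fingraph.root R x)) ?roots_root //=.
    by rewrite {1}/pp big_ord0 mul0r.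
  have F : T -> False by move=> x; have := T0 x.
  pose k0 : {ffun T -> 'I_0} := [ffun x => match F x with end].
  rewrite (big_pred1 k0) => [|k]; last first.
    have E : k = k0 by apply/ffunP => x; case: (F x).
    by rewrite E /= eqxx; apply/forallP => x; case: (F x).
  rewrite big_pred0 => [|x]; last by case: (F x).
  by rewrite big_pred0 // => x; case: (F x).
pose G (k : {ffun T -> 'I_N.+1}) : {mpoly rat[N.+1]} := \prod_(r | roots R r) 'X_(k r) ^+ csz R r.
have EG : forall k : {ffun T -> 'I_N.+1}, [forall v, k v == k (fingraph.root R v)] ->
    \prod_v 'X_(k v) = G k.
  move=> k /forallP H.
  rewrite (eq_bigr (fun v => 'X_(k (fingraph.root R v)))); last by move=> v _; rewrite -(eqP (H v)).
  rewrite (partition_big (fun v => fingraph.root R v) (roots R)) /=; last first.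
    by move=> v _; apply: roots_root.
  apply: eq_bigr => r /eqP rr.
  rewrite (eq_bigr (fun _ => 'X_(k r))); last by move=> v /eqP ->.
  by rewrite prodr_const /csz; congr (_ ^+ _); apply: eq_card => v; rewrite !inE.
rewrite (eq_bigr G) => [|k]; last by apply: EG.
pose h (k' : {ffun T -> 'I_N.+1}) := [ffun v => k' (fingraph.root R v)].
pose h' (k : {ffun T -> 'I_N.+1}) := [ffun v => if roots R v then k v else ord0].
rewrite (reindex_onto h h') => [|k /forallP H]; last first.
  apply/ffunP => v; rewrite !ffunE roots_root //.
  by rewrite (eqP (H v)).
transitivity (\sum_(k' : {ffun T -> 'I_N.+1} | [forall v, ~~ roots R v ==> (k' v == ord0)]) G k').
  apply: eq_big => k'.
    have -> : [forall v, h k' v == h k' (fingraph.root R v)].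
      by apply/forallP => v; rewrite !ffunE root_root.
    rewrite /=; apply/eqP/forallP => [E v|H].
      apply/implyP => nr; move/ffunP: E => /(_ v); rewrite !ffunE (negbTE nr).
      by move=> <-.
    apply/ffunP => v; rewrite !ffunE; case: ifP => rv.
      by rewrite (eqP rv).
    by have /implyP/(_ (negbT rv))/eqP := H v.
  move=> _; apply: eq_bigr => r rr; rewrite ffunE.
  by rewrite (eqP rr).
pose H' (v : T) (j : 'I_N.+1) : {mpoly rat[N.+1]} :=
  if roots R v then 'X_j ^+ csz R v else ((j == ord0)%:R).
transitivity (\prod_v \sum_(j : 'I_N.+1) H' v j); last first.
  rewrite [LHS](bigID (roots R)) /= [X in _ * X = _]big1 ?mulr1; last first.
    move=> v nr; rewrite /H' (negbTE nr).
    by rewrite (bigD1 ord0) //= big1 ?addr0 // => j /negbTE ->.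
  by apply: eq_bigr => v rv; rewrite /pp /H' rv.
rewrite bigA_distr_bigA /= [LHS]big_mkcond /=; apply: eq_bigr => k' _.
case: ifP => [/forallP Z|/negbT/forallPn [v]].
  rewrite (bigID (roots R)) /= [X in _ = _ * X]big1 ?mulr1; last first.
    by move=> v nr; rewrite /H' (negbTE nr) (eqP (implyP (Z v) nr)) eqxx.
  by apply: eq_bigr => v rv; rewrite /H' rv.
rewrite negb_imply => /andP[nr nz].
by rewrite (bigD1 v) //= /H' (negbTE nr) (negbTE nz) mul0r.
Qed.

Definition inV (f : sym_fun) : Prop :=
  exists s : seq (seq nat * rat), all is_partition (map fst s) /\ forall N, f N = path_comb s N.

Lemma inV_ext (f g : sym_fun) : (forall N, f N = g N) -> inV f -> inV g.
Proof. by move=> fg [s [Ps Es]]; exists s; split => // N; rewrite -fg. Qed.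

Lemma inV0 : inV (fun N => 0).
Proof. by exists [::]; split => // N; rewrite /path_comb big_nil. Qed.

Lemma inV1 : inV (fun N => 1).
Proof.
exists [:: ([::], 1)]; split => // N.
by rewrite /path_comb big_cons big_nil addr0 scale1r XP_nil.
Qed.

Lemma inV_add (f g : sym_fun) : inV f -> inV g -> inV (fun N => f N + g N).
Proof.
move=> [s1 [P1 E1]] [s2 [P2 E2]]; exists (s1 ++ s2); split.
  by rewrite map_cat all_cat P1 P2.
by move=> N; rewrite E1 E2 /path_comb big_cat.
Qed.

Lemma inV_scale a (f : sym_fun) : inV f -> inV (fun N => a *: f N).
Proof.
move=> [s [P E]]; exists (map (fun p => (p.1, a * p.2)) s); split.
  by rewrite -map_comp.
move=> N; rewrite E /path_comb big_map scaler_sumr /=.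
by apply: eq_bigr => p _; rewrite scalerA.
Qed.

Lemma geq_total : total geq.
Proof. by move=> a b; apply: leq_total. Qed.

Lemma XP_sort l1 l2 N : XP (sort geq (l1 ++ l2)) N = XP l1 N * XP l2 N.
Proof.
have ps : perm_eq (sort geq (l1 ++ l2)) (l1 ++ l2) by rewrite perm_sort.
by rewrite !XP_prod (perm_big _ ps) big_cat.
Qed.

Lemma inV_mul (f g : sym_fun) : inV f -> inV g -> inV (fun N => f N * g N).
Proof.
move=> [s1 [P1 E1]] [s2 [P2 E2]].
exists (map (fun pq : (seq nat * rat) * (seq nat * rat) =>
   (sort geq (pq.1.1 ++ pq.2.1), pq.1.2 * pq.2.2)) [seq (p, q) | p <- s1, q <- s2]).
split.
  rewrite -map_comp; apply/allP => x /mapP [[p q] /allpairsP [[p' q'] [ps qs [-> ->]]] ->] /=.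
  rewrite /is_partition sort_sorted ?geq_total //=.
  have pst : perm_eq (sort geq (p'.1 ++ q'.1)) (p'.1 ++ q'.1) by rewrite perm_sort.
  rewrite (perm_all _ pst) all_cat.
  move/allP: P1 => /(_ p'.1 (map_f _ ps)) /andP[_ ->].
  by move/allP: P2 => /(_ q'.1 (map_f _ qs)) /andP[_ ->].
move=> N; rewrite E1 E2 /path_comb big_map big_allpairs big_distrl /=.
apply: eq_bigr => p _; rewrite big_distrr /=; apply: eq_bigr => q _.
by rewrite XP_sort -scalerAl -scalerAr scalerA mulrC.
Qed.

Lemma inV_sum (I : Type) (r : seq I) (P : pred I) (F : I -> sym_fun) :
  (forall i, P i -> inV (F i)) -> inV (fun N => \sum_(i <- r | P i) F i N).
Proof.
move=> H; elim: r => [|i r IH].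
  by apply: inV_ext inV0 => N; rewrite big_nil.
case Pi: (P i).
  apply: inV_ext (inV_add (H i Pi) IH) => N.
  by rewrite big_cons Pi.
by apply: inV_ext IH => N; rewrite big_cons Pi.
Qed.

Lemma inV_prod (I : Type) (r : seq I) (P : pred I) (F : I -> sym_fun) :
  (forall i, P i -> inV (F i)) -> inV (fun N => \prod_(i <- r | P i) F i N).
Proof.
move=> H; elim: r => [|i r IH].
  by apply: inV_ext inV1 => N; rewrite big_nil.
case Pi: (P i).
  apply: inV_ext (inV_mul (H i Pi) IH) => N.
  by rewrite big_cons Pi.
by apply: inV_ext IH => N; rewrite big_cons Pi.
Qed.

Lemma inV_Pth c : (0 < c)%N -> inV (Pth c).
Proof.
move=> c0; exists [:: ([:: c], 1)]; split; first by rewrite /= /is_partition /= c0.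
move=> N; rewrite /path_comb big_cons big_nil addr0 scale1r /=.
by rewrite XP_prod big_cons big_nil mulr1.
Qed.

Lemma csz_gt0 (T : finType) (R : rel T) r : roots R r -> (0 < csz R r)%N.
Proof.
move=> rr; rewrite /csz card_gt0; apply/set0Pn; exists r; rewrite inE.
exact: rr.
Qed.

Lemma inV_pp : forall c, (0 < c)%N -> inV (pp c).
Proof.
elim/ltn_ind => c IH c0.
pose D : {set 'I_c * 'I_c} := [set p : 'I_c * 'I_c | (p.1 : nat).+1 == p.2].
have HD : forall N (k : {ffun 'I_c -> 'I_N}),
    proper_col (@pathrel c) k = [forall p in D, k p.1 != k p.2].
  move=> N k; apply/forallP/forallP => [H [x y]|H x].
    apply/implyP; rewrite inE /= => xy.
    by have /implyP := forallP (H x) y; apply; rewrite /pathrel xy.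
  apply/forallP => y; apply/implyP => /orP[xy|yx].
    by have /implyP := H (x, y); apply; rewrite inE.
  by have /implyP := H (y, x); rewrite inE /= yx => /(_ isT); rewrite eq_sym.
pose fD : {ffun 'I_c * 'I_c -> bool} := [ffun p => p \in D].
have cfD : cf D fD != 0.
  apply/prodf_neq0 => p _; rewrite ffunE; case: (p \in D) => /=;
  by rewrite ?oppr_eq0 ?oner_eq0.
have Rest : inV (fun N => \sum_(f | f != fD) cf D f *: CS f N).
  apply: inV_sum => f ffD.
  case: (boolP [forall p, f p ==> (p \in D)]) => [/forallP sub|]; last first.
    case/forallPn => p; rewrite negb_imply => /andP[fp pD].
    apply: inV_ext inV0 => N.
    by rewrite /cf (bigD1 p) //= fp (negbTE pD) mul0r scale0r.
  apply: inV_scale.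
  have [p pD fp] : exists2 p, p \in D & ~~ f p.
    apply: NNPP => H; move/negP: ffD; apply; apply/eqP/ffunP => p.
    rewrite ffunE; case: (boolP (f p)) => fp; first by rewrite (implyP (sub p) fp).
    by case: (boolP (p \in D)) => // pD; case: H; exists p.
  case: p pD fp => a b pD fp.
  set R := relf f.
  have csym := sym_connect_sym (@relf_sym _ f).
  apply: inV_ext (fun N => esym (CS_prod f N)) _.
  apply: inV_prod => r rr; apply: IH; last exact: csz_gt0.
  (* the class of r is not everything *)
  move: pD; rewrite inE => /eqP ab.
  pose A := [pred v : 'I_c | (v <= a)%N].
  have clA : closed R A.
    have key : forall x y : 'I_c, f (x, y) -> (x \in A) = (y \in A).
      move=> x y fxy; have := implyP (sub (x, y)) fxy; rewrite inE /= => /eqP xy.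
      have xa : (x : nat) != a.
        apply/negP => /eqP xa; move: fp.
        have -> : a = x by apply: val_inj.
        have -> : b = y by apply: val_inj; rewrite /= -ab -xy xa.
        by rewrite fxy.
      rewrite !inE /= -xy ltn_neqAle eq_sym.
      by move: xa; rewrite eq_sym => /negbTE ->.
    move=> x y /orP[fxy|fyx]; first exact: key.
    by rewrite (key _ _ fyx).
  have notall : [set y | fingraph.root R y == r] != [set: 'I_c].
    have inA : forall y, fingraph.root R y == r -> (y \in A) = (r \in A).
      move=> y /eqP ry; apply: closed_connect clA _ _ _.
      by rewrite -ry; apply: connect_root.
    case: (boolP (r \in A)) => rA.
      apply/negP => /eqP E.
      have : b \in [set y | fingraph.root R y == r] by rewrite E inE.
      rewrite inE => /inA; rewrite rA !inE -ab ltnn.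
      done.
    apply/negP => /eqP E.
    have : a \in [set y | fingraph.root R y == r] by rewrite E inE.
    rewrite inE => /inA; rewrite (negbTE rA) !inE leqnn.
    done.
  have : [set y | fingraph.root R y == r] \proper [set: 'I_c] by rewrite properT.
  by move/proper_card; rewrite /csz cardsT card_ord.
have main : forall N, CS fD N = pp c N.
  move=> N; rewrite CS_prod.
  set R := relf fD.
  have csym := sym_connect_sym (@relf_sym _ fD).
  pose z : 'I_c := Ordinal c0.
  have Rxy : forall x y : 'I_c, (x : nat).+1 == y -> R x y.
    by move=> x y xy; rewrite /R /relf ffunE inE /= xy.
  have conn : forall y : 'I_c, connect R z y.
    move=> [j Hj]; elim: j Hj => [|j IHj] Hj.
      by have -> : Ordinal Hj = z by apply: val_inj.
    apply: connect_trans (IHj (ltnW Hj)) _; apply: connect1; apply: Rxy; by [].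
  have rootE : forall r, roots R r = (r == fingraph.root R z).
    move=> r; apply/idP/eqP => [rr|->]; last exact: roots_root csym z.
    by move/(fingraph.rootP csym): (conn r) => ->; apply/esym/eqP.
  rewrite (big_pred1 (fingraph.root R z)) //.
  rewrite /csz (_ : [set y | fingraph.root R y == fingraph.root R z] = setT) ?cardsT ?card_ord //.
  apply/setP => y; rewrite !inE; apply/eqP/(fingraph.rootP csym).
  by rewrite csym; apply: conn.
apply: inV_ext (inV_scale (cf D fD)^-1 (inV_add (inV_Pth c0) (inV_scale (-1) Rest))) => N.
rewrite /Pth (stanley (HD N)) (bigD1 fD) //= main scaleN1r addrK scalerA mulVf //.
by rewrite scale1r.
Qed.

Lemma seq_max (s : seq nat) x : exists2 M, M \in x :: s & forall y, y \in x :: s -> (y <= M)%N.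
Proof.
elim: s x => [|a s IH] x.
  by exists x; rewrite ?inE // => y; rewrite inE => /eqP ->.
have [M Ms HM] := IH a.
case: (leqP x M) => xM.
  exists M; first by rewrite inE Ms orbT.
  by move=> y; rewrite inE => /orP[/eqP ->|]; [|apply: HM].
exists x; first by rewrite inE eqxx.
move=> y; rewrite inE => /orP[/eqP -> //|/HM yM].
by apply: leq_trans yM (ltnW xM).
Qed.

Lemma pathrel_sym c : ssrbool.symmetric (@pathrel c).
Proof. by move=> a b; rewrite /pathrel orbC. Qed.

Lemma pathrel_irr c : irreflexive (@pathrel c).
Proof. by move=> a; rewrite /pathrel orbb eqn_leq ltnn. Qed.

Lemma pathrel_acyclic c : acyclic (@pathrel c).
Proof.
move=> [cy [U S C]].
case: cy U S C => [//|x0 cy0] U S C.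
have [M0 HM0 HM] := seq_max (map val cy0) (val x0).
have /mapP [M Mc EM] : M0 \in map val (x0 :: cy0) by [].
subst M0.
have HM' : forall y, y \in x0 :: cy0 -> (y <= M)%N.
  by move=> y yc; apply: HM; rewrite -map_cons; apply: map_f.
have [i s' E] := rot_to Mc.
have U' : uniq (M :: s') by rewrite -E rot_uniq.
have C' : cycle (@pathrel c) (M :: s') by rewrite -E rot_cycle.
have S' : (2 < size (M :: s'))%N by rewrite -E size_rot.
have sub : forall y, y \in s' -> y \in x0 :: cy0.
  by move=> y ys; rewrite -(mem_rot i) E inE ys orbT.
case: s' E U' C' S' sub => [//|a s''] E U' C' S' sub.
case: s'' E U' C' S' sub => [//|b0 s'''] E U' C' S' sub.
set b := last b0 s'''.
have ab : a != b.
  move: U' => /= /andP[_ /andP[]]; rewrite inE negb_or => /andP[ab0 nas] _.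
  apply/negP => /eqP abE; move: (mem_last b0 s'''); rewrite -/b -abE inE.
  by rewrite (negbTE ab0) (negbTE nas).
move: C'; rewrite /cycle /= => /andP[eMa].
rewrite rcons_path => /andP[_]; rewrite /= -/b => ebM.
have aM : (a <= M)%N by apply: HM'; apply: sub; rewrite inE eqxx.
have bM : (b <= M)%N.
  apply: HM'; apply: sub; rewrite inE; apply/orP; right.
  exact: mem_last.
have Ma : (a : nat).+1 = M.
  move: eMa; rewrite /pathrel => /orP[/eqP H|/eqP //].
  by move: aM; rewrite -H ltnn.
have Mb : (b : nat).+1 = M.
  move: ebM => /andP[_]; rewrite /pathrel => /orP[/eqP //|/eqP H].
  by move: bM; rewrite -H ltnn.
move/negP: ab; apply; apply/eqP/val_inj.
by apply: succn_inj; rewrite Ma Mb.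
Qed.

Lemma path_conn c (c0 : (0 < c)%N) (y : 'I_c) : connect (@pathrel c) (Ordinal c0) y.
Proof.
case: y => j Hj; elim: j Hj => [|j IHj] Hj.
  by have -> : Ordinal Hj = Ordinal c0 by apply: val_inj.
apply: connect_trans (IHj (ltnW Hj)) _; apply: connect1.
by rewrite /pathrel /= eqxx.
Qed.

Lemma path_ncomp c (c0 : (0 < c)%N) : n_comp (@pathrel c) 'I_c = 1%N.
Proof.
have csym := sym_connect_sym (@pathrel_sym c).
rewrite -(n_comp_connect csym (Ordinal c0)); apply: eq_n_comp_r => y.
by rewrite !inE path_conn.
Qed.

Lemma path_count c K : (0 < c)%N ->
  (\sum_(k : {ffun 'I_c -> 'I_K.+1}) (proper_col (@pathrel c) k : nat))%N
    = (K.+1 * K ^ c.-1)%N.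
Proof.
move=> c0.
have [-> _] := forest_count K (leqnn _) (@pathrel_sym c) (@pathrel_irr c) (@pathrel_acyclic c).
by rewrite path_ncomp // card_ord expn1 subn1.
Qed.

Lemma inV_XG (T : finType) (e : rel T) : inV (XG e).
Proof.
pose D : {set T * T} := [set p | e p.1 p.2].
have HD : forall N (k : {ffun T -> 'I_N}), proper_col e k = [forall p in D, k p.1 != k p.2].
  move=> N k; apply/forallP/forallP => [H [x y]|H x].
    by apply/implyP; rewrite inE /= => exy; have /implyP := forallP (H x) y; apply.
  by apply/forallP => y; apply/implyP => exy; have /implyP := H (x, y); apply; rewrite inE.
apply: inV_ext (fun N => esym (stanley (HD N))) _.
apply: inV_sum => f _; apply: inV_scale.
apply: inV_ext (fun N => esym (CS_prod f N)) _.
by apply: inV_prod => r rr; apply: inV_pp; apply: csz_gt0.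
Qed.

Lemma prod_const_rat (T : finType) (t : rat) : \prod_(v : T) t = t ^+ #|T|.
Proof. by rewrite -prodr_const; apply: eq_bigl => v; rewrite inE. Qed.

Lemma eval_chrom (T : finType) (e : rel T) K (t : rat) :
  (chrom e K).@[fun _ => t] =
  ((\sum_(k : {ffun T -> 'I_K}) (proper_col e k : nat))%N)%:R * t ^+ #|T|.
Proof.
rewrite /chrom rmorph_sum /= natr_sum big_distrl /= big_mkcond /=.
apply: eq_bigr => k _; case: (proper_col e k); rewrite /= ?mul0r //.
by rewrite rmorph_prod /= mul1r (eq_bigr (fun _ => t)) ?prod_const_rat // => v _; rewrite mevalXU.
Qed.

Definition uK (K : nat) : rat := K.+2%:R / K.+1%:R.

Lemma eval_Pth x K : (0 < x)%N -> (Pth x K.+2).@[fun _ => (K.+1%:R)^-1] = uK K.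
Proof.
move=> x0; rewrite /Pth eval_chrom path_count // card_ord /uK.
case: x x0 => [//|x] _ /=.
have u0 : (K.+1%:R : rat) != 0 by rewrite pnatr_eq0.
rewrite natrM natrX exprVn exprS invfM -mulrA; congr (_ * _).
by rewrite mulrCA mulfV ?expf_neq0 // mulr1.
Qed.

Lemma eval_XP l K : all (fun x => 0 < x)%N l ->
  (XP l K.+2).@[fun _ => (K.+1%:R)^-1] = uK K ^+ size l.
Proof.
rewrite XP_prod rmorph_prod /=; elim: l => [|x l IH] /=; first by rewrite big_nil.
by case/andP => x0 /IH {}IH; rewrite big_cons IH eval_Pth // exprS.
Qed.

Lemma eval_forest (T : finType) (e : rel T) K :
  ssrbool.symmetric e -> irreflexive e -> acyclic e ->
  (chrom e K.+2).@[fun _ => (K.+1%:R)^-1] = uK K ^+ n_comp e T.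
Proof.
move=> esym eirr eacy.
rewrite eval_chrom.
have [-> le] := forest_count K.+1 (leqnn _) esym eirr eacy.
rewrite natrM !natrX /uK.
have u0 : (K.+1%:R : rat) != 0 by rewrite pnatr_eq0.
rewrite -{2}(subnK le) exprVn exprD invfM -mulrA (mulrA (_ ^+ (#|T| - _))).
by rewrite mulfV ?expf_neq0 // mul1r exprMn exprVn.
Qed.

Lemma uK_inj : injective uK.
Proof.
move=> a b; rewrite /uK => /eqP; rewrite eqr_div ?pnatr_eq0 // -!natrM eqr_nat => /eqP H.
lia.
Qed.

Lemma poly_inf_roots (p : {poly rat}) : (forall K, p.[uK K] = 0) -> p = 0.
Proof.
move=> H; apply/eqP; apply: contraT => p0.
have := max_poly_roots p0 (rs := map uK (iota 0 (size p))).
rewrite size_map size_iota ltnn; apply.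
  by apply/allP => x /mapP [K _ ->]; apply/eqP; apply: H.
by rewrite map_inj_uniq ?iota_uniq //; apply: uK_inj.
Qed.

Lemma tau_comb_eval s u : (tau_comb s).[u] = \sum_(p <- s) p.2 * u ^+ size p.1.
Proof.
rewrite /tau_comb horner_sum; apply: eq_bigr => p _.
by rewrite hornerZ hornerXn.
Qed.

Lemma unique_tau (T : finType) (e : rel T) (s : seq (seq nat * rat)) :
  ssrbool.symmetric e -> irreflexive e -> acyclic e ->
  all is_partition (map fst s) -> (forall N, XG e N = path_comb s N) ->
  tau_comb s = 'X^(n_comp e T).
Proof.
move=> esym eirr eacy Ps Es; apply/eqP; rewrite -subr_eq0; apply/eqP.
apply: poly_inf_roots => K; rewrite hornerD hornerN hornerXn tau_comb_eval.
apply/eqP; rewrite subr_eq0; apply/eqP.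
rewrite -(eval_forest K esym eirr eacy).
have := Es K.+2; rewrite /XG => ->; rewrite /path_comb rmorph_sum /=.
apply: eq_big_seq => p ps; rewrite mevalZ eval_XP //.
move/allP: Ps => /(_ p.1 (map_f _ ps)) /andP[_].
done.
Qed.

Theorem proposition3p2 (T : finType) (e : rel T) (n m : nat) :
  ssrbool.symmetric e -> irreflexive e -> acyclic e ->
  #|T| = n -> n_comp e T = m ->
  tauG e = 'X^m.
Proof.
move=> esym eirr eacy _ <-.
have ex : exists q, is_tree_poly (XG e) q.
  have [s [Ps Es]] := inV_XG e.
  by exists (tau_comb s), s.
rewrite /tauG /tau.
have [s [Ps Es ->]] := epsilon_spec (inhabits 0) _ ex.
exact: unique_tau.
Qed.
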